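(* Let $(\mu_z^\varepsilon)_{z\in V,\varepsilon\in[0,1]}$ be a time-affine random walk on $\mathcal G$. Then for every pair of distinct vertices $x,y$, the function $\varepsilon\mapsto {}^{\mathcal O}\mathrm{Ric}_\varepsilon(x,y)$ is concave on $[0,1]$.
   Context: $\mathcal G$ is a locally finite graph with vertex set $V$, and $\mathrm d$ is a distance on $V$ such that $(V,\mathrm d)$ is a complete metric space. A random walk is a family of probability measures $\mu_z^\varepsilon$ on $V$ ($z\in V$, $\varepsilon\in[0,1]$), each with finite first moment, continuous in $\varepsilon$, with $\mu_z^0=\delta_z$. It is time-affine if for all $x,y\in V$ the function $\varepsilon\mapsto\mu_x^\varepsilon(y)$ is affine. $\mathcal W_1$ denotes the $L^1$-Wasserstein distance with respect to $\mathrm d$: $\mathcal W_1(\mu,\nu)=\inf_q\sum_{u,v}\mathrm d(u,v)q(u,v)$ over couplings $q$ of $\mu,\nu$. The discrete-time Ollivier–Ricci curvature is ${}^{\mathcal O}\mathrm{Ric}_\varepsilon(x,y):=1-\mathcal W_1(\mu_x^\varepsilon,\mu_y^\varepsilon)/\mathrm d(x,y)$. *)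

(* Defs.v *)
From HB Require Import structures.
From mathcomp Require Import all_boot all_order all_algebra.
From mathcomp Require Import all_classical all_reals.
From mathcomp Require Import ereal topology normedtype sequences esum.
Set Implicit Arguments. Unset Strict Implicit. Unset Printing Implicit Defensive.
Import Order.TTheory GRing.Theory Num.Theory.
Import numFieldNormedType.Exports.
Local Open Scope classical_set_scope.
Local Open Scope ring_scope.

Definition locally_finite_graph (V : choiceType) (adj : V -> V -> Prop) : Prop :=
  (forall x y, adj x y -> adj y x) /\ (forall x, ~ adj x x) /\
  (forall x, finite_set [set y | adj x y]).

Definition is_distance (R : realType) (V : choiceType) (d : V -> V -> R) : Prop :=
  (forall x y, 0 <= d x y) /\ (forall x y, d x y = 0 <-> x = y) /\
  (forall x y, d x y = d y x) /\ (forall x y z, d x z <= d x y + d y z).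

Definition complete_distance (R : realType) (V : choiceType) (d : V -> V -> R) : Prop :=
  forall u : nat -> V,
    (forall e : R, 0 < e -> exists N : nat, forall m n, (N <= m)%N -> (N <= n)%N ->
        d (u m) (u n) < e) ->
    exists l : V, forall e : R, 0 < e -> exists N : nat, forall n, (N <= n)%N ->
        d (u n) l < e.

Definition is_prob (R : realType) (V : choiceType) (p : V -> R) : Prop :=
  (forall v, 0 <= p v) /\ (\esum_(v in [set: V]) (p v)%:E = 1%E).

Definition finite_first_moment (R : realType) (V : choiceType) (d : V -> V -> R)
    (p : V -> R) : Prop :=
  forall z0 : V, (\esum_(v in [set: V]) (d z0 v * p v)%:E < +oo)%E.

Definition dirac_mass (R : realType) (V : choiceType) (z : V) : V -> R :=
  fun v => if asbool (v = z) then 1 else 0.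

Definition is_coupling (R : realType) (V : choiceType) (p q : V -> R) (c : V * V -> R) : Prop :=
  (forall w, 0 <= c w) /\
  (forall u, \esum_(v in [set: V]) (c (u, v))%:E = (p u)%:E) /\
  (forall v, \esum_(u in [set: V]) (c (u, v))%:E = (q v)%:E).

Definition W1 (R : realType) (V : choiceType) (d : V -> V -> R) (p q : V -> R) : \bar R :=
  ereal_inf [set (\esum_(w in [set: V * V]) (d w.1 w.2 * c w)%:E)%E
            | c in [set c | is_coupling p q c]].

(* A random walk: mu z eps is the measure mu_z^eps, eps in [0,1]. *)
Definition is_random_walk (R : realType) (V : choiceType) (d : V -> V -> R)
    (mu : V -> R -> V -> R) : Prop :=
  (forall z eps, 0 <= eps <= 1 -> is_prob (mu z eps) /\ finite_first_moment d (mu z eps)) /\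
  (forall z y, {within `[0, 1]%classic, continuous (fun eps : R => mu z eps y)}) /\
  (forall z, mu z 0 = dirac_mass R z).

Definition time_affine (R : realType) (V : choiceType) (mu : V -> R -> V -> R) : Prop :=
  forall x y, exists a b : R, forall eps, 0 <= eps <= 1 -> mu x eps y = a + b * eps.

Definition ORic (R : realType) (V : choiceType) (d : V -> V -> R) (mu : V -> R -> V -> R)
    (eps : R) (x y : V) : R :=
  1 - fine (W1 d (mu x eps) (mu y eps)) / d x y.

(* Main.v *)
Require Import Defs.
From HB Require Import structures.
From mathcomp Require Import all_boot all_order all_algebra.
From mathcomp Require Import all_classical all_reals.
From mathcomp Require Import ereal topology normedtype sequences esum.
From mathcomp Require Import ring lra.
Import Order.TTheory GRing.Theory Num.Theory.
Import numFieldNormedType.Exports.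
Set Implicit Arguments. Unset Strict Implicit.
Local Open Scope ring_scope.

Section Helpers.
Local Open Scope ereal_scope.
Local Open Scope classical_set_scope.

Lemma esumZl {R : realType} {T : choiceType} (S : set T) {a : T -> \bar R} {k : R} :
  (0 <= k)%R -> (forall i, 0 <= a i) ->
  \esum_(i in S) (k%:E * a i) = k%:E * \esum_(i in S) a i.
Proof.
move=> k0 a0; rewrite /esum -ereal_supZl //; last first.
  apply/set0P; exists 0; exists set0; [exact: fsets_set0 | by rewrite fsbig_set0].
congr ereal_sup; apply/seteqP; split => z /=.
- case=> A FA <-; exists (\sum_(i \in A) a i); first by exists A.
  by rewrite ge0_mule_fsumr.
- case=> _ [A FA <-] <-; exists A => //; by rewrite ge0_mule_fsumr.
Qed.

Lemma setT_prod (T : choiceType) : [set: T * T] = [set: T] `*`` (fun _ => [set: T]).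
Proof. by apply/seteqP; split => z. Qed.


Definition cost {R : realType} {V : choiceType} (d : V -> V -> R) (c : V * V -> R) : \bar R :=
  \esum_(w in [set: V * V]) (d w.1 w.2 * c w)%:E.

Definition mixf {R : realType} {V : Type} (t : R) (f g : V -> R) : V -> R :=
  fun v => ((1 - t) * f v + t * g v)%R.

Lemma esum_mix {R : realType} {T : choiceType} {S : set T} (f g : T -> R) (t : R) :
  (0 <= t <= 1)%R -> (forall i, 0 <= f i)%R -> (forall i, 0 <= g i)%R ->
  \esum_(i in S) (mixf t f g i)%:E =
  (1 - t)%:E * (\esum_(i in S) (f i)%:E) + t%:E * (\esum_(i in S) (g i)%:E).
Proof.
move=> /andP[t0 t1] f0 g0.
rewrite /mixf; under eq_esum do rewrite EFinD !EFinM.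
rewrite esumD; first last.
- by move=> i _; rewrite mule_ge0 ?lee_fin.
- by move=> i _; rewrite mule_ge0 ?lee_fin ?subr_ge0.
have f0' : forall i, 0 <= (f i)%:E by move=> i; rewrite lee_fin.
have g0' : forall i, 0 <= (g i)%:E by move=> i; rewrite lee_fin.
have t0' : (0 <= 1 - t)%R by rewrite subr_ge0.
by rewrite (esumZl S t0' f0') (esumZl S t0 g0').
Qed.

Lemma mix_coupling (R : realType) (V : choiceType) (p1 q1 p2 q2 : V -> R) c1 c2 (t : R) :
  (0 <= t <= 1)%R -> is_coupling p1 q1 c1 -> is_coupling p2 q2 c2 ->
  is_coupling (mixf t p1 p2) (mixf t q1 q2) (mixf t c1 c2).
Proof.
move=> /[dup] tt /andP[t0 t1] [c10 [c1l c1r]] [c20 [c2l c2r]]; split; [|split].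
- by move=> w; rewrite /mixf addr_ge0 ?mulr_ge0 ?subr_ge0.
- move=> u; rewrite (esum_mix (f:=fun v => c1 (u, v)) (g:=fun v => c2 (u, v))) //.
  by rewrite c1l c2l -!EFinM -EFinD.
- move=> v; rewrite (esum_mix (f:=fun u => c1 (u, v)) (g:=fun u => c2 (u, v))) //.
  by rewrite c1r c2r -!EFinM -EFinD.
Qed.

Lemma cost_mix (R : realType) (V : choiceType) (d : V -> V -> R) c1 c2 (t : R) :
  (forall x y, 0 <= d x y)%R -> (forall w, 0 <= c1 w)%R -> (forall w, 0 <= c2 w)%R ->
  (0 <= t <= 1)%R ->
  cost d (mixf t c1 c2) = (1 - t)%:E * cost d c1 + t%:E * cost d c2.
Proof.
move=> d0 c10 c20 tt; rewrite /cost -esum_mix //; last first.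
- by move=> w; rewrite mulr_ge0.
- by move=> w; rewrite mulr_ge0.
apply: eq_esum => w _; congr (_%:E); rewrite /mixf; ring.
Qed.


Lemma W1_ge0 (R : realType) (V : choiceType) (d : V -> V -> R) (p q : V -> R) :
  is_distance d -> 0 <= W1 d p q.
Proof.
move=> [d0 _]; apply: le_ereal_inf_tmp => _ [c [c0 _] <-].
by apply: esum_ge0 => w _; rewrite lee_fin mulr_ge0.
Qed.

Lemma W1_le (R : realType) (V : choiceType) (d : V -> V -> R) (p q : V -> R) c :
  is_coupling p q c -> W1 d p q <= cost d c.
Proof. by move=> cc; apply: ereal_inf_lbound; exists c. Qed.

Lemma prod_coupling (R : realType) (V : choiceType) (p q : V -> R) :
  is_prob p -> is_prob q -> is_coupling p q (fun w => p w.1 * q w.2)%R.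
Proof.
move=> [p0 p1] [q0 q1]; split; [|split].
- by move=> w; rewrite mulr_ge0.
- move=> u /=; under eq_esum do rewrite EFinM.
  by rewrite (esumZl _ (p0 u)) ?q1 ?mule1 // => v; rewrite lee_fin.
- move=> v /=; under eq_esum do rewrite EFinM muleC.
  by rewrite (esumZl _ (q0 v)) ?p1 ?mule1 // => u; rewrite lee_fin.
Qed.

Lemma W1_fin (R : realType) (V : choiceType) (d : V -> V -> R) (p q : V -> R) (x : V) :
  is_distance d -> is_prob p -> is_prob q -> finite_first_moment d p ->
  finite_first_moment d q -> W1 d p q \is a fin_num.
Proof.
move=> /[dup] dd [d0 [_ [dsym dtri]]] /[dup] pp [p0 p1] /[dup] qq [q0 q1] mp mq.
rewrite ge0_fin_numE ?W1_ge0 //.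
apply: (le_lt_trans (W1_le d (prod_coupling pp qq)) _).
have A0 : forall u, 0 <= (d x u * p u)%:E by move=> u; rewrite lee_fin mulr_ge0.
have B0 : forall u, 0 <= (d x u * q u)%:E by move=> u; rewrite lee_fin mulr_ge0.
have Mp := mp x; have Mq := mq x.
have [mP eP] : exists m, \esum_(u in [set: V]) (d x u * p u)%:E = m%:E.
  exists (fine (\esum_(u in [set: V]) (d x u * p u)%:E)); rewrite fineK //.
  by rewrite ge0_fin_numE // esum_ge0.
have [mQ eQ] : exists m, \esum_(u in [set: V]) (d x u * q u)%:E = m%:E.
  exists (fine (\esum_(u in [set: V]) (d x u * q u)%:E)); rewrite fineK //.
  by rewrite ge0_fin_numE // esum_ge0.
apply: (@le_lt_trans _ _ (\esum_(w in [set: V * V])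
   ((d x w.1 * p w.1 * q w.2)%:E + (p w.1 * (d x w.2 * q w.2))%:E))).
  apply: le_esum => w _; rewrite -EFinD lee_fin.
  have := dtri w.1 x w.2; rewrite (dsym w.1 x) => h.
  have := mulr_ge0 (p0 w.1) (q0 w.2) => h2.
  by rewrite -mulrA (mulrCA (p w.1)) -mulrDl ler_wpM2r.
rewrite esumD; first last.
- by move=> w _; rewrite lee_fin !mulr_ge0.
- by move=> w _; rewrite lee_fin !mulr_ge0.
have -> : \esum_(w in [set: V * V]) (d x w.1 * p w.1 * q w.2)%:E
    = \esum_(i in [set: V]) \esum_(j in [set: V]) (d x i * p i * q j)%:E.
  rewrite setT_prod (esum_esum (a := fun i j => (d x i * p i * q j)%:E)) //.
  by move=> u v _ _; rewrite lee_fin !mulr_ge0.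
have -> : \esum_(w in [set: V * V]) (p w.1 * (d x w.2 * q w.2))%:E
    = \esum_(i in [set: V]) \esum_(j in [set: V]) (p i * (d x j * q j))%:E.
  rewrite setT_prod (esum_esum (a := fun i j => (p i * (d x j * q j))%:E)) //.
  by move=> u v _ _; rewrite lee_fin !mulr_ge0.
have -> : \esum_(i in [set: V]) \esum_(j in [set: V]) (d x i * p i * q j)%:E
    = \esum_(i in [set: V]) (d x i * p i)%:E.
  apply: eq_esum => u _; under eq_esum do rewrite EFinM.
  by rewrite (esumZl _ (mulr_ge0 (d0 x u) (p0 u))) ?q1 ?mule1 // => v; rewrite lee_fin.
have -> : \esum_(i in [set: V]) \esum_(j in [set: V]) (p i * (d x j * q j))%:E
    = \esum_(i in [set: V]) (mQ * p i)%:E.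
  apply: eq_esum => u _; under eq_esum do rewrite EFinM.
  by rewrite (esumZl _ (p0 u)) // eQ -EFinM mulrC.
have mQ0 : (0 <= mQ)%R by rewrite -lee_fin -eQ esum_ge0.
under [X in _ + X < _]eq_esum do rewrite EFinM.
by rewrite (esumZl _ mQ0) ?p1 ?mule1 ?eP -?EFinD ?ltry // => u; rewrite lee_fin.
Qed.


Lemma cost_fin (R : realType) (V : choiceType) (d : V -> V -> R) c (b : R) :
  (forall x y, 0 <= d x y)%R -> (forall w, 0 <= c w)%R ->
  cost d c < b%:E -> exists k, cost d c = k%:E.
Proof.
move=> d0 c0 lt; exists (fine (cost d c)); rewrite fineK //.
rewrite ge0_fin_numE; first by apply: (lt_trans lt); rewrite ltry.
by apply: esum_ge0 => w _; rewrite lee_fin mulr_ge0.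
Qed.

Lemma W1_convex (R : realType) (V : choiceType) (d : V -> V -> R) p1 q1 p2 q2 (t w1 w2 : R) :
  is_distance d -> (0 <= t <= 1)%R -> W1 d p1 q1 = w1%:E -> W1 d p2 q2 = w2%:E ->
  W1 d (mixf t p1 p2) (mixf t q1 q2) <= ((1 - t) * w1 + t * w2)%:E.
Proof.
move=> [d0 _] /[dup] tt /andP[t0 t1] h1 h2.
apply/lee_addgt0Pr => e e0.
have : W1 d p1 q1 < (w1 + e)%:E by rewrite h1 lte_fin ltrDl.
case/ereal_inf_lt => _ [c1 cc1 <-] lt1.
have : W1 d p2 q2 < (w2 + e)%:E by rewrite h2 lte_fin ltrDl.
case/ereal_inf_lt => _ [c2 cc2 <-] lt2.
have [k1 ek1] := cost_fin d0 cc1.1 lt1.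
have [k2 ek2] := cost_fin d0 cc2.1 lt2.
apply: le_trans (W1_le d (mix_coupling tt cc1 cc2)) _.
rewrite cost_mix //; [|exact: cc1.1|exact: cc2.1].
rewrite ek1 ek2 -!EFinM -!EFinD lee_fin.
have lt1' : (k1 < w1 + e)%R by rewrite -lte_fin -ek1.
have lt2' : (k2 < w2 + e)%R by rewrite -lte_fin -ek2.
nra.
Qed.

End Helpers.

Theorem mainTheorem4 (R : realType) (V : choiceType) (adj : V -> V -> Prop)
  (d : V -> V -> R) (mu : V -> R -> V -> R) :
  locally_finite_graph adj ->
  is_distance d -> complete_distance d ->
  is_random_walk d mu -> time_affine mu ->
  forall x y : V, x <> y ->
  forall e1 e2 t : R, 0 <= e1 <= 1 -> 0 <= e2 <= 1 -> 0 <= t <= 1 ->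
    (1 - t) * ORic d mu e1 x y + t * ORic d mu e2 x y
      <= ORic d mu ((1 - t) * e1 + t * e2) x y.
Proof.
move=> _ dd _ [rw _] ta x y xy e1 e2 t he1 he2 ht.
have hm : 0 <= (1 - t) * e1 + t * e2 <= 1.
  move: he1 he2 ht => /andP[? ?] /andP[? ?] /andP[? ?]; apply/andP; split; nra.
have mix_mu : forall z, mu z ((1 - t) * e1 + t * e2) = mixf t (mu z e1) (mu z e2).
  move=> z; apply: funext => v; have [a [b hab]] := ta z v.
  by rewrite /mixf !hab //; ring.
rewrite /ORic (mix_mu x) (mix_mu y).
have f1 := W1_fin x dd (rw x e1 he1).1 (rw y e1 he1).1 (rw x e1 he1).2 (rw y e1 he1).2.
have f2 := W1_fin x dd (rw x e2 he2).1 (rw y e2 he2).1 (rw x e2 he2).2 (rw y e2 he2).2.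
set w1 := fine (W1 d (mu x e1) (mu y e1)).
set w2 := fine (W1 d (mu x e2) (mu y e2)).
have h1 : W1 d (mu x e1) (mu y e1) = w1%:E by rewrite fineK.
have h2 : W1 d (mu x e2) (mu y e2) = w2%:E by rewrite fineK.
have hc := W1_convex dd ht h1 h2.
have fm : W1 d (mixf t (mu x e1) (mu x e2)) (mixf t (mu y e1) (mu y e2)) \is a fin_num.
  by rewrite ge0_fin_numE ?W1_ge0 // (le_lt_trans hc) ?ltry.
set A := fine (W1 d (mixf t (mu x e1) (mu x e2)) (mixf t (mu y e1) (mu y e2))).
have le : A <= (1 - t) * w1 + t * w2 by rewrite -lee_fin /A fineK.
have D0 : 0 < d x y.
  case: dd => d0 [dz _]; rewrite lt_neqAle d0 andbT eq_sym.
  by apply/eqP => /dz.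
have iD0 : 0 <= (d x y)^-1 by rewrite invr_ge0 ltW.
have le2 : A / d x y <= ((1 - t) * w1 + t * w2) / d x y by rewrite ler_wpM2r.
have E : ((1 - t) * w1 + t * w2) / d x y = (1 - t) * (w1 / d x y) + t * (w2 / d x y).
  by rewrite mulrDl !mulrA.
rewrite E in le2.
have E2 : (1 - t) * (1 - w1 / d x y) + t * (1 - w2 / d x y)
   = 1 - ((1 - t) * (w1 / d x y) + t * (w2 / d x y)) by ring.
rewrite E2; lra.
Qed.
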